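(* Let $n\ge2$. For all $x,y\in\mathbb{H}^n$, $$\tfrac14\rho_{\mathbb{H}^n}(x,y)\le\tilde\tau_{\mathbb{H}^n}(x,y)\le\rho_{\mathbb{H}^n}(x,y)\quad\text{and}\quad \tilde\tau_{\mathbb{H}^n}(x,y)\le\tfrac12\rho_{\mathbb{H}^n}(x,y)+\log\tfrac54,$$ and all these inequalities are sharp: $$\inf_{x\ne y}\frac{\tilde\tau_{\mathbb{H}^n}(x,y)}{\rho_{\mathbb{H}^n}(x,y)}=\tfrac14,\qquad \sup_{x\ne y}\frac{\tilde\tau_{\mathbb{H}^n}(x,y)}{\rho_{\mathbb{H}^n}(x,y)}=1,$$ and equality $\tilde\tau_{\mathbb{H}^n}(x,y)=\tfrac12\rho_{\mathbb{H}^n}(x,y)+\log\tfrac54$ holds for $x=2e_n$, $y=\tfrac12e_n$.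
   Context: $\mathbb{H}^n=\{(x_1,\dots,x_n)\in\mathbb{R}^n:x_n>0\}$ with boundary $\{x_n=0\}$ in $\mathbb{R}^n$; $e_n$ is the $n$-th standard basis vector. The hyperbolic metric $\rho_{\mathbb{H}^n}$ is given by $\cosh\rho_{\mathbb{H}^n}(x,y)=1+\frac{|x-y|^2}{2x_ny_n}$. For a proper subdomain $D\subsetneq\mathbb{R}^n$ and $x,y\in D$, $\tilde\tau_D(x,y)=\log\big(1+\sup_{p\in\partial D}\frac{|x-y|}{\sqrt{|x-p||y-p|}}\big)$ (the scale invariant Cassinian metric). *)

(* Defs.v *)
From Stdlib Require Import Reals Lra ClassicalEpsilon.
Open Scope R_scope.

(* Points of R^n are functions nat -> R; only coordinates 0..n-1 are meaningful.
   Coordinate x_n of the paper is index n-1 here. *)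
Definition pt := nat -> R.

Fixpoint sumR (n : nat) (f : nat -> R) : R :=
  match n with O => 0 | S k => sumR k f + f k end.

Definition edist (n : nat) (x y : pt) : R :=
  sqrt (sumR n (fun i => (x i - y i) ^ 2)).

Definition lastc (n : nat) (x : pt) : R := x (n - 1)%nat.

Definition inH (n : nat) (x : pt) : Prop := 0 < lastc n x.
Definition inbdH (n : nat) (p : pt) : Prop := lastc n p = 0.

Definition ptneq (n : nat) (x y : pt) : Prop := exists i, (i < n)%nat /\ x i <> y i.

Definition cen (n : nat) (c : R) : pt := fun i => if Nat.eqb i (n - 1) then c else 0.

Definition arcosh (t : R) : R := ln (t + sqrt (t ^ 2 - 1)).

Definition rhoH (n : nat) (x y : pt) : R :=
  arcosh (1 + (edist n x y) ^ 2 / (2 * lastc n x * lastc n y)).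

(* supremum (least upper bound) of a set of reals, chosen classically;
   meaningful when the lub exists (it does below: the set is bounded and nonempty). *)
Definition supR (E : R -> Prop) : R :=
  epsilon (inhabits 0) (fun l => is_lub E l).

Definition is_glb (E : R -> Prop) (m : R) : Prop :=
  (forall x, E x -> m <= x) /\ (forall b, (forall x, E x -> b <= x) -> b <= m).

Definition cass_set (n : nat) (x y : pt) : R -> Prop :=
  fun t => exists p, inbdH n p /\
    t = edist n x y / sqrt (edist n x p * edist n y p).

Definition tauH (n : nat) (x y : pt) : R := ln (1 + supR (cass_set n x y)).

Definition ratio_set (n : nat) : R -> Prop :=
  fun r => exists x y, inH n x /\ inH n y /\ ptneq n x y /\ r = tauH n x y / rhoH n x y.

(* Main.v *)
Require Import Defs.
From Stdlib Require Import Reals Lra Lia Psatz ClassicalEpsilon Classical.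
Open Scope R_scope.

Lemma lnle (x y : R) : 0 < x -> x <= y -> ln x <= ln y.
Proof. intros hx [h|h]. left; apply ln_increasing; auto. subst; lra. Qed.

Lemma ln_le_sub1 (y : R) : 0 < y -> ln y <= y - 1.
Proof. intros hy. destruct (Req_dec (ln y) 0) as [e|e].
  - rewrite e. assert (y = 1). { rewrite <- (exp_ln y) by auto. rewrite e. apply exp_0. } lra.
  - pose proof (exp_ineq1 _ e). rewrite exp_ln in H by auto. lra. Qed.

Lemma sumR_ext n f g : (forall i, (i < n)%nat -> f i = g i) -> sumR n f = sumR n g.
Proof. induction n; simpl; intros H; auto. rewrite IHn by (intros; apply H; lia). rewrite H by lia. auto. Qed.

Lemma sumR_nonneg n f : (forall i, 0 <= f i) -> 0 <= sumR n f.
Proof. induction n; simpl; intros H. lra. specialize (IHn H). specialize (H n). lra. Qed.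

Lemma sumR_zero n : sumR n (fun _ => 0) = 0.
Proof. induction n; simpl; auto. rewrite IHn; lra. Qed.

Lemma sumR_single n f k : (k < n)%nat -> (forall i, (i < n)%nat -> i <> k -> f i = 0) -> sumR n f = f k.
Proof. induction n; simpl; intros hk H. lia.
  destruct (Nat.eq_dec k n) as [->|ne].
  - rewrite (sumR_ext n f (fun _ => 0)). rewrite sumR_zero; lra.
    intros; apply H; lia.
  - rewrite IHn by (try lia; intros; apply H; lia). rewrite (H n) by lia. lra. Qed.

Lemma sumR_ge1 n f k : (forall i, 0 <= f i) -> (k < n)%nat -> f k <= sumR n f.
Proof. induction n; simpl; intros H hk. lia.
  destruct (Nat.eq_dec k n) as [->|ne].
  - pose proof (sumR_nonneg n f H). lra.
  - pose proof (IHn H ltac:(lia)). pose proof (H n). lra. Qed.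

Lemma sumR_ge2 n f j k : (forall i, 0 <= f i) -> (j < n)%nat -> (k < n)%nat -> j <> k -> f j + f k <= sumR n f.
Proof. induction n; simpl; intros H hj hk jk. lia.
  destruct (Nat.eq_dec k n) as [->|ne].
  - pose proof (sumR_ge1 n f j H ltac:(lia)). lra.
  - destruct (Nat.eq_dec j n) as [->|ne2].
    + pose proof (sumR_ge1 n f k H ltac:(lia)). lra.
    + pose proof (IHn H ltac:(lia) ltac:(lia) jk). pose proof (H n). lra. Qed.

Lemma sumR_last n f : (1 <= n)%nat -> sumR n f = sumR (n-1) f + f (n-1)%nat.
Proof. intros h. destruct n. lia. simpl. replace (n - 0)%nat with n by lia. auto. Qed.

Lemma edist_sym n x y : edist n x y = edist n y x.
Proof. unfold edist. f_equal. apply sumR_ext. intros; ring. Qed.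

Lemma edist_nonneg n x y : 0 <= edist n x y.
Proof. apply sqrt_pos. Qed.

Lemma sq_nonneg_f (x y : pt) : forall i, 0 <= (x i - y i) ^ 2.
Proof. intros; apply pow2_ge_0. Qed.

Lemma edist_ge_last n x p : (1 <= n)%nat -> inH n x -> inbdH n p -> lastc n x <= edist n x p.
Proof. intros hn hx hp. unfold inH, inbdH, lastc in *. unfold edist.
  rewrite <- (sqrt_pow2 (x (n-1)%nat)) by lra. apply sqrt_le_1_alt.
  pose proof (sumR_ge1 n _ (n-1)%nat (sq_nonneg_f x p) ltac:(lia)). simpl in H. rewrite hp in H. replace (x (n - 1)%nat ^ 2) with ((x (n - 1)%nat - 0) ^ 2) by ring. exact H. Qed.

Lemma lub_supR (E : R -> Prop) : bound E -> (exists x, E x) -> is_lub E (supR E).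
Proof. intros hb he. destruct (completeness E hb he) as [m hm]. unfold supR.
  apply epsilon_spec. eauto. Qed.


Lemma key_ineq (a b H : R) : 0<a -> a<=b -> 0<=H ->
  sqrt(H+(a-b)^2)/sqrt(a*b) <= (sqrt(H+(a-b)^2)/sqrt(a*sqrt(H+b^2)))^2 + 2*(sqrt(H+(a-b)^2)/sqrt(a*sqrt(H+b^2))).
Proof. intros ha hab hH.
  set (t := sqrt(H+(a-b)^2)). set (R0 := sqrt(H+b^2)).
  assert (ht : 0 <= t) by apply sqrt_pos.
  assert (ht2 : t*t = H+(a-b)^2) by (apply sqrt_sqrt; nra).
  assert (hR : 0 <= R0) by apply sqrt_pos.
  assert (hR2 : R0*R0 = H+b^2) by (apply sqrt_sqrt; nra).
  assert (hRb : b <= R0) by nra.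
  assert (hRt : R0 <= t + b) by nra.
  rewrite !sqrt_mult by lra.
  set (al := sqrt a). set (be := sqrt b). set (r := sqrt R0).
  assert (hal : 0 < al) by (apply sqrt_lt_R0; lra).
  assert (hbe : 0 < be) by (apply sqrt_lt_R0; lra).
  assert (hr : 0 < r) by (apply sqrt_lt_R0; lra).
  assert (hal2 : al*al = a) by (apply sqrt_sqrt; lra).
  assert (hbe2 : be*be = b) by (apply sqrt_sqrt; lra).
  assert (hr2 : r*r = R0) by (apply sqrt_sqrt; lra).
  assert (halbe : al <= be) by (apply sqrt_le_1_alt; lra).
  assert (hrbe : be <= r) by (apply sqrt_le_1_alt; lra).
  assert (k1 : al * (r*r) <= al*t + al*(be*be)) by (rewrite hr2, hbe2; nra).
  assert (k2 : al*t <= be*t) by nra.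
  assert (k3 : al*(be*be) <= 2*al*r*be).
  { replace (2*al*r*be) with ((al*be)*(2*r)) by ring. replace (al*(be*be)) with ((al*be)*be) by ring.
    apply Rmult_le_compat_l; nra. }
  assert (key : al * (r*r) <= t*be + 2*al*r*be) by nra.
  apply Rmult_le_reg_r with (al*al*r*r*be). repeat apply Rmult_lt_0_compat; auto.
  replace (t / (al * be) * (al * al * r * r * be)) with (t * al * r * r) by (field; lra).
  replace (((t / (al * r)) ^ 2 + 2 * (t / (al * r))) * (al * al * r * r * be)) with
    (t*(t*be + 2*al*r*be)) by (field; lra).
  nra. Qed.


Definition uu n x y := edist n x y / sqrt (lastc n x * lastc n y).
Definition ww u := (u + sqrt (u^2+4))/2.

Lemma ww_props u : 0 <= u -> 0 < ww u /\ ww u * ww u = u * ww u + 1.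
Proof. intros hu. unfold ww. set (S := sqrt (u^2+4)).
  assert (hS : 0 <= S) by apply sqrt_pos.
  assert (hS2 : S*S = u^2+4) by (apply sqrt_sqrt; nra).
  assert (2 <= S). { rewrite <- (sqrt_pow2 2) by lra. apply sqrt_le_1_alt. nra. }
  split. lra. nra. Qed.

Lemma uu_nonneg n x y : inH n x -> inH n y -> 0 <= uu n x y.
Proof. unfold inH, uu; intros hx hy. apply Rmult_le_pos. apply edist_nonneg. left; apply Rinv_0_lt_compat.
  apply sqrt_lt_R0; nra. Qed.

Lemma rho_eq n x y : inH n x -> inH n y -> rhoH n x y = 2 * ln (ww (uu n x y)).
Proof. intros hx hy. pose proof (uu_nonneg n x y hx hy) as hu.
  destruct (ww_props _ hu) as [hw hw2].
  unfold rhoH, arcosh. unfold inH in *.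
  set (a := lastc n x) in *. set (b := lastc n y) in *.
  set (t := edist n x y). set (u := uu n x y) in *. set (w := ww u) in *.
  assert (hab : 0 < sqrt (a*b)) by (apply sqrt_lt_R0; nra).
  assert (hab2 : sqrt (a*b) * sqrt (a*b) = a*b) by (apply sqrt_sqrt; nra).
  assert (hue : u = t / sqrt (a*b)) by reflexivity.
  assert (hut : u * sqrt (a*b) = t) by (rewrite hue; field; lra).
  assert (hC : 1 + t^2/(2*a*b) = 1 + u^2/2).
  { assert (ht2 : t^2 = u^2 * (a*b)) by (rewrite <- hut; set (q := sqrt (a*b)) in *; rewrite <- hab2; ring).
    rewrite ht2. field. lra. }
  rewrite hC.
  set (S := sqrt (u^2+4)).
  assert (hS : 0 <= S) by apply sqrt_pos.
  assert (hS2 : S*S = u^2+4) by (apply sqrt_sqrt; nra).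
  assert (hsq : sqrt ((1 + u^2/2)^2 - 1) = u*S/2).
  { apply sqrt_lem_1. nra. nra. nra. }
  rewrite hsq.
  replace (1 + u^2/2 + u*S/2) with (w*w).
  rewrite ln_mult by lra. ring.
  unfold w, ww; fold S. nra. Qed.


Lemma cass_le_uu n x y e : (1 <= n)%nat -> inH n x -> inH n y -> cass_set n x y e -> e <= uu n x y.
Proof. intros hn hx hy [p [hp ->]]. unfold uu.
  pose proof (edist_ge_last n x p hn hx hp). pose proof (edist_ge_last n y p hn hy hp).
  unfold inH in *. apply Rmult_le_compat_l. apply edist_nonneg.
  apply Rinv_le_contravar. apply sqrt_lt_R0; nra. apply sqrt_le_1_alt.
  apply Rmult_le_compat; lra. Qed.

Lemma cass_sym n x y e : cass_set n x y e -> cass_set n y x e.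
Proof. intros [p [hp ->]]. exists p. split; auto. rewrite edist_sym, Rmult_comm. auto. Qed.

Lemma uu_sym n x y : uu n x y = uu n y x.
Proof. unfold uu. rewrite edist_sym, Rmult_comm. auto. Qed.

Lemma cass_key_le n x y : (1 <= n)%nat -> inH n x -> inH n y -> lastc n x <= lastc n y ->
  exists e, cass_set n x y e /\ 0 <= e /\ uu n x y <= e^2 + 2*e.
Proof. intros hn hx hy hab.
  set (p := fun i => if Nat.eqb i (n-1) then 0 else x i).
  set (H := sumR (n-1) (fun i => (x i - y i)^2)).
  assert (hH : 0 <= H) by (apply sumR_nonneg; apply sq_nonneg_f).
  unfold inH in *. set (a := lastc n x) in *. set (b := lastc n y) in *.
  assert (hxp : edist n x p = a).
  { unfold edist. rewrite (sumR_single n _ (n-1)%nat). unfold p. rewrite Nat.eqb_refl.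
    replace (x (n-1)%nat - 0) with a by (unfold a, lastc; ring). apply sqrt_pow2; lra. lia.
    intros i hi hne. unfold p. apply Nat.eqb_neq in hne. rewrite hne. ring. }
  assert (hyp : edist n y p = sqrt (H + b^2)).
  { unfold edist. rewrite sumR_last by auto. f_equal. f_equal.
    - apply sumR_ext. intros i hi. unfold p. assert (i <> n-1)%nat by lia.
      apply Nat.eqb_neq in H0. rewrite H0. ring.
    - unfold p. rewrite Nat.eqb_refl. unfold b, lastc. ring. }
  assert (hxy : edist n x y = sqrt (H + (a-b)^2)).
  { unfold edist. rewrite sumR_last by auto. reflexivity. }
  exists (edist n x y / sqrt (edist n x p * edist n y p)). split.
  - exists p. split; auto. unfold inbdH, lastc, p. rewrite Nat.eqb_refl. auto.
  - rewrite hxp, hyp, hxy. split.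
    + apply Rmult_le_pos. apply sqrt_pos. left. apply Rinv_0_lt_compat. apply sqrt_lt_R0.
      apply Rmult_lt_0_compat. lra. apply sqrt_lt_R0. nra.
    + unfold uu. rewrite hxy. fold a b. apply key_ineq; auto. Qed.

Lemma cass_key n x y : (1 <= n)%nat -> inH n x -> inH n y ->
  exists e, cass_set n x y e /\ 0 <= e /\ uu n x y <= e^2 + 2*e.
Proof. intros hn hx hy. destruct (Rle_dec (lastc n x) (lastc n y)).
  - apply cass_key_le; auto.
  - destruct (cass_key_le n y x hn hy hx ltac:(lra)) as [e [h1 h2]]. exists e.
    split. apply cass_sym; auto. rewrite uu_sym; auto. Qed.

Lemma tau_props n x y : (1 <= n)%nat -> inH n x -> inH n y ->
  exists s, tauH n x y = ln (1 + s) /\ is_lub (cass_set n x y) s /\ 0 <= s /\ s <= uu n x y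
    /\ uu n x y <= s^2 + 2*s.
Proof. intros hn hx hy. destruct (cass_key n x y hn hx hy) as [e [he [he0 heu]]].
  assert (hl : is_lub (cass_set n x y) (supR (cass_set n x y))).
  { apply lub_supR. exists (uu n x y). intros z hz. apply cass_le_uu; auto. eauto. }
  exists (supR (cass_set n x y)). split. reflexivity. split. auto.
  destruct hl as [h1 h2]. pose proof (h1 e he).
  assert (supR (cass_set n x y) <= uu n x y).
  { apply h2. intros z hz. apply cass_le_uu; auto. }
  split. lra. split. auto. nra. Qed.


Lemma partA n x y : (1 <= n)%nat -> inH n x -> inH n y ->
     rhoH n x y / 4 <= tauH n x y /\
     tauH n x y <= rhoH n x y /\
     tauH n x y <= rhoH n x y / 2 + ln (5 / 4).
Proof. intros hn hx hy.
  destruct (tau_props n x y hn hx hy) as [s [hts [_ [hs0 [hsu hus]]]]].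
  rewrite (rho_eq n x y hx hy), hts.
  pose proof (uu_nonneg n x y hx hy) as hu.
  destruct (ww_props _ hu) as [hw hw2].
  set (u := uu n x y) in *. set (w := ww u) in *.
  assert (hw1 : 1 <= w) by nra.
  split; [|split].
  - assert (ln w <= ln ((1+s)*(1+s))).
    { apply lnle. lra. nra. }
    rewrite ln_mult in H by lra. lra.
  - assert (ln (1+s) <= ln (w*w)). { apply lnle. lra. nra. }
    rewrite ln_mult in H by lra. lra.
  - assert (ln (1+s) <= ln (5/4 * w)). { apply lnle. lra.
      assert (1 + u <= 5/4*w). { apply Rmult_le_reg_r with w. lra. pose proof (pow2_ge_0 (w/2-1)). nra. } lra. }
    rewrite ln_mult in H by lra. lra. Qed.

Lemma lastc_cen n c : lastc n (cen n c) = c.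
Proof. unfold lastc, cen. rewrite Nat.eqb_refl. auto. Qed.

Lemma edist_cen n a b : (1 <= n)%nat -> edist n (cen n a) (cen n b) = sqrt ((a-b)^2).
Proof. intros hn. unfold edist. f_equal. rewrite (sumR_single n _ (n-1)%nat) by
  (try lia; intros i hi hne; unfold cen; apply Nat.eqb_neq in hne; rewrite hne; ring).
  unfold cen; rewrite Nat.eqb_refl. auto. Qed.

Lemma tau_vert n a b : (1 <= n)%nat -> 0 < a -> 0 < b ->
  tauH n (cen n a) (cen n b) = ln (1 + uu n (cen n a) (cen n b)).
Proof. intros hn ha hb.
  assert (hx : inH n (cen n a)) by (unfold inH; rewrite lastc_cen; auto).
  assert (hy : inH n (cen n b)) by (unfold inH; rewrite lastc_cen; auto).
  destruct (tau_props n _ _ hn hx hy) as [s [hts [hl [hs0 [hsu hus]]]]].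
  rewrite hts. f_equal. f_equal. apply Rle_antisym; auto.
  destruct hl as [h1 _]. apply h1. exists (cen n 0). split. unfold inbdH; apply lastc_cen.
  unfold uu. rewrite !lastc_cen, !edist_cen by auto. f_equal. f_equal.
  replace (a-0) with a by ring. replace (b-0) with b by ring. rewrite !sqrt_pow2 by lra. auto. Qed.

Lemma partD n : (1 <= n)%nat ->
  tauH n (cen n 2) (cen n (1 / 2)) = rhoH n (cen n 2) (cen n (1 / 2)) / 2 + ln (5 / 4).
Proof. intros hn.
  assert (hx : inH n (cen n 2)) by (unfold inH; rewrite lastc_cen; lra).
  assert (hy : inH n (cen n (1/2))) by (unfold inH; rewrite lastc_cen; lra).
  rewrite (rho_eq n _ _ hx hy), tau_vert by (auto; lra).
  assert (hu : uu n (cen n 2) (cen n (1/2)) = 3/2).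
  { unfold uu. rewrite !lastc_cen, edist_cen by auto.
    replace (2 * (1/2)) with 1 by field. rewrite sqrt_1.
    replace (2 - 1/2) with (3/2) by field. rewrite sqrt_pow2 by lra. field. }
  rewrite hu. unfold ww.
  replace (sqrt ((3/2)^2 + 4)) with (5/2).
  replace ((3/2 + 5/2)/2) with 2 by field.
  replace (1 + 3/2) with (2 * (5/4)) by field. rewrite ln_mult by lra. field.
  symmetry. apply sqrt_lem_1; lra. Qed.


Lemma ln_pos x : 1 < x -> 0 < ln x.
Proof. intros h. rewrite <- ln_1. apply ln_increasing; lra. Qed.

Lemma rho_pos_of_uu n x y : inH n x -> inH n y -> 0 < uu n x y -> 0 < rhoH n x y /\ 1 < ww (uu n x y).
Proof. intros hx hy hu. rewrite rho_eq by auto. destruct (ww_props _ (Rlt_le _ _ hu)) as [hw hw2].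
  assert (1 < ww (uu n x y)) by nra. split; auto. pose proof (ln_pos _ H). lra. Qed.

Lemma rho_pos n x y : inH n x -> inH n y -> ptneq n x y -> 0 < rhoH n x y.
Proof. intros hx hy [i [hi hne]]. apply (rho_pos_of_uu n x y hx hy).
  unfold uu, inH in *. apply Rmult_lt_0_compat. unfold edist. apply sqrt_lt_R0.
  pose proof (sumR_ge1 n _ i (sq_nonneg_f x y) hi). cbv beta in H.
  assert (0 < (x i - y i)^2).
  { replace ((x i - y i)^2) with (Rsqr (x i - y i)) by (unfold Rsqr; ring). apply Rsqr_pos_lt. lra. }
  lra. apply Rinv_0_lt_compat. apply sqrt_lt_R0. nra. Qed.

Lemma ln_lower z : 0 < z -> z / (1 + z) <= ln (1 + z).
Proof. intros hz. pose proof (ln_le_sub1 (/ (1+z)) ltac:(apply Rinv_0_lt_compat; lra)).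
  rewrite ln_Rinv in H by lra.
  replace (z/(1+z)) with (1 - /(1+z)) by (field; lra). lra. Qed.

Lemma partC n b : (2 <= n)%nat -> 0 < b < 1 -> exists r, ratio_set n r /\ b < r.
Proof. intros hn hb.
  set (d := (1-b)/8). set (w := 1 + d).
  assert (hd : 0 < d /\ d <= 1/8) by (unfold d; split; lra).
  assert (hw : 1 < w) by (unfold w; lra).
  assert (hx : inH n (cen n 1)) by (unfold inH; rewrite lastc_cen; lra).
  assert (hy : inH n (cen n (w*w))) by (unfold inH; rewrite lastc_cen; nra).
  set (u := (w*w-1)/w).
  assert (hu : uu n (cen n 1) (cen n (w*w)) = u).
  { unfold uu. rewrite !lastc_cen, edist_cen by lia.
    replace ((1 - w*w)^2) with ((w*w-1)^2) by ring. rewrite sqrt_pow2 by nra.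
    rewrite (sqrt_lem_1 (1*(w*w)) w) by nra. auto. }
  assert (hu0 : 0 < u) by (unfold u; apply Rdiv_lt_0_compat; nra).
  assert (hww : ww u = w).
  { destruct (ww_props u ltac:(lra)) as [h1 h2].
    assert (hw2 : w*w = u*w+1) by (unfold u; field; lra).
    set (w' := ww u) in *. assert ((w'-w)*(w'+w-u) = 0) by nra.
    assert (w'+w-u > 0). { assert (u < w) by (unfold u; apply Rmult_lt_reg_r with w; [lra|]; field_simplify; nra). lra. }
    apply Rmult_integral in H. destruct H; lra. }
  exists (tauH n (cen n 1) (cen n (w*w)) / rhoH n (cen n 1) (cen n (w*w))). split.
  - exists (cen n 1), (cen n (w*w)). repeat split; auto. exists (n-1)%nat. split. lia.
    unfold cen. rewrite Nat.eqb_refl. nra.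
  - rewrite tau_vert, rho_eq by (auto; lia || lra || nra). rewrite hu, hww.
    pose proof (ln_lower u hu0). pose proof (ln_le_sub1 w ltac:(lra)). pose proof (ln_pos w hw).
    apply Rmult_lt_reg_r with (2 * ln w). lra.
    replace (ln (1 + u) / (2 * ln w) * (2 * ln w)) with (ln (1+u)) by (field; lra).
    assert (u / (1+u) > 2*b*d).
    { assert (hq : u / (1+u) = d*(2+d)/(1+3*d+d*d)) by (unfold u, w; field; nra).
      rewrite hq. apply Rlt_gt. apply Rmult_lt_reg_r with (1+3*d+d*d). nra.
      replace (d*(2+d)/(1+3*d+d*d) * (1+3*d+d*d)) with (d*(2+d)) by (field; nra).
      assert (2*b*(1+3*d+d*d) < 2+d).
      { assert (8*d = 1-b) by (unfold d; field). nra. }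
      nra. }
    assert (b * ln w <= b * d). { apply Rmult_le_compat_l. lra. unfold w in *. lra. }
    lra. Qed.

Lemma partB n B : (2 <= n)%nat -> 1/4 < B -> exists r, ratio_set n r /\ r < B.
Proof. intros hn hB.
  assert (hl2 : 0 < ln 2) by (apply ln_pos; lra).
  set (L := ln 2 + ln 2 / (4*B-1) + 1).
  assert (hL1 : (4*B-1) * L > ln 2).
  { unfold L. replace ((4*B-1) * (ln 2 + ln 2 / (4*B-1) + 1)) with ((4*B-1)*ln 2 + ln 2 + (4*B-1)) by (field; lra).
    assert (0 < (4*B-1)*ln 2) by (apply Rmult_lt_0_compat; lra). lra. }
  assert (hL2 : ln 2 <= L). { unfold L. assert (0 <= ln 2 / (4*B-1)) by (apply Rmult_le_pos; [lra|left; apply Rinv_0_lt_compat; lra]). lra. }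
  set (v := exp L).
  assert (hv : 2 <= v). { unfold v. rewrite <- (exp_ln 2) by lra. destruct hL2 as [h|h]. left; apply exp_increasing; auto. rewrite h; lra. }
  assert (hlv : ln v = L) by (unfold v; apply ln_exp).
  set (d := v*v+1).
  set (x := cen n 1). set (y := fun i => if Nat.eqb i 0 then d else cen n 1 i).
  assert (hn0 : (0 <> n-1)%nat) by lia.
  assert (hx0 : x 0%nat = 0). { unfold x, cen. assert ((0 =? n-1)%nat = false) by (apply Nat.eqb_neq; lia). rewrite H; auto. }
  assert (hx : inH n x) by (unfold inH, x; rewrite lastc_cen; lra).
  assert (hly : lastc n y = 1). { unfold lastc, y. assert ((n-1 =? 0)%nat = false) by (apply Nat.eqb_neq; lia). rewrite H. apply lastc_cen. }
  assert (hy : inH n y) by (unfold inH; lra).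
  assert (ht : edist n x y = d).
  { unfold edist. rewrite (sumR_single n _ 0%nat). rewrite hx0. unfold y. simpl.
    replace ((0-d)*((0-d)*1)) with (d^2) by ring. apply sqrt_pow2. unfold d; nra. lia.
    intros i hi hne. unfold y. apply Nat.eqb_neq in hne. rewrite hne. fold x. ring. }
  assert (hu : uu n x y = d). { unfold uu. rewrite ht, hly. unfold x. rewrite lastc_cen. replace (1*1) with 1 by ring. rewrite sqrt_1. field. }
  assert (hsub : forall e, cass_set n x y e -> e <= d / v).
  { intros e [p [hp ->]]. rewrite ht.
    set (al := edist n x p). set (be := edist n y p).
    assert (hal : al*al >= p 0%nat ^2 + 1).
    { unfold al, edist. rewrite sqrt_sqrt by (apply sumR_nonneg; apply sq_nonneg_f).
      pose proof (sumR_ge2 n _ 0%nat (n-1)%nat (sq_nonneg_f x p) ltac:(lia) ltac:(lia) hn0). cbv beta in H.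
      unfold inbdH, lastc in hp. rewrite hp, hx0 in H. assert (hxl : x (n-1)%nat = 1) by (unfold x; apply lastc_cen). rewrite hxl in H. replace ((0 - p 0%nat) ^ 2 + (1 - 0) ^ 2) with (p 0%nat ^ 2 + 1) in H by ring. lra. }
    assert (hbe : be*be >= (d - p 0%nat) ^2 + 1).
    { unfold be, edist. rewrite sqrt_sqrt by (apply sumR_nonneg; apply sq_nonneg_f).
      pose proof (sumR_ge2 n _ 0%nat (n-1)%nat (sq_nonneg_f y p) ltac:(lia) ltac:(lia) hn0). cbv beta in H.
      unfold inbdH in hp. unfold lastc in hp, hly. rewrite hp, hly in H. assert (hy0 : y 0%nat = d) by reflexivity. rewrite hy0 in H. replace ((1 - 0) ^ 2) with 1 in H by ring. lra. }
    assert (hal0 : 0 <= al) by apply edist_nonneg. assert (hbe0 : 0 <= be) by apply edist_nonneg.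
    assert (al*al >= 1) by (pose proof (pow2_ge_0 (p 0%nat)); lra). assert (be*be >= 1) by (pose proof (pow2_ge_0 (d - p 0%nat)); lra). assert (1 <= al) by nra. assert (1 <= be) by nra.
    assert (p 0%nat <= al) by nra. assert (d - p 0%nat <= be) by nra.
    assert (v*v <= al*be) by (unfold d in *; nra).
    assert (v <= sqrt (al*be)). { rewrite <- (sqrt_lem_1 (v*v) v) by nra. apply sqrt_le_1_alt; auto. }
    apply Rmult_le_compat_l. unfold d; nra. apply Rinv_le_contravar; lra. }
  destruct (tau_props n x y ltac:(lia) hx hy) as [s [hts [hl [hs0 [hsu hus]]]]].
  assert (s <= d / v) by (apply hl; exact hsub).
  assert (htau : tauH n x y <= ln 2 + L).
  { rewrite hts, <- hlv, <- ln_mult by lra. apply lnle. lra.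
    assert (d / v <= 2*v - 1).
    { apply Rmult_le_reg_r with v. lra. replace (d/v*v) with d by (field; lra). unfold d. nra. } lra. }
  pose proof (uu_nonneg n x y hx hy) as hu0. destruct (ww_props _ hu0) as [hw hw2].
  rewrite hu in hw, hw2.
  assert (hwd : d <= ww d) by nra.
  assert (hrho : 4 * L <= rhoH n x y).
  { rewrite rho_eq, hu by auto. assert (ln (v*v) <= ln (ww d)). { apply lnle. apply Rmult_lt_0_compat; lra. assert (v*v <= d) by (unfold d; lra). lra. }
    rewrite ln_mult, hlv in H0 by lra. lra. }
  exists (tauH n x y / rhoH n x y). split.
  - exists x, y. repeat split; auto. exists 0%nat. split. lia. rewrite hx0. unfold y. simpl. unfold d; nra.
  - assert (0 < L) by lra. apply Rmult_lt_reg_r with (rhoH n x y). lra.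
    replace (tauH n x y / rhoH n x y * rhoH n x y) with (tauH n x y) by (field; lra). nra. Qed.

Theorem theorem4p2 (n : nat) (hn : (2 <= n)%nat) :
  (forall x y : pt, inH n x -> inH n y ->
     rhoH n x y / 4 <= tauH n x y /\
     tauH n x y <= rhoH n x y /\
     tauH n x y <= rhoH n x y / 2 + ln (5 / 4)) /\
  is_glb (ratio_set n) (1 / 4) /\
  is_lub (ratio_set n) 1 /\
  tauH n (cen n 2) (cen n (1 / 2)) = rhoH n (cen n 2) (cen n (1 / 2)) / 2 + ln (5 / 4).
Proof.
  split. intros x y hx hy. apply partA; auto; lia.
  split; [|split].
  - split.
    + intros r [x [y [hx [hy [hne ->]]]]]. pose proof (rho_pos n x y hx hy hne).
      destruct (partA n x y ltac:(lia) hx hy) as [h1 _].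
      apply Rmult_le_reg_r with (rhoH n x y). lra.
      replace (tauH n x y / rhoH n x y * rhoH n x y) with (tauH n x y) by (field; lra). lra.
    + intros B hB. destruct (Rle_dec B (1/4)) as [h|h]; auto.
      destruct (partB n B hn ltac:(lra)) as [r [hr hrB]]. pose proof (hB r hr). lra.
  - split.
    + intros r [x [y [hx [hy [hne ->]]]]]. pose proof (rho_pos n x y hx hy hne).
      destruct (partA n x y ltac:(lia) hx hy) as [_ [h2 _]].
      apply Rmult_le_reg_r with (rhoH n x y). lra.
      replace (tauH n x y / rhoH n x y * rhoH n x y) with (tauH n x y) by (field; lra). lra.
    + intros B hB. destruct (Rle_dec 1 B) as [h|h]; auto.
      destruct (partC n (Rmax B (1/2)) hn) as [r [hr hrB]].
      { split. pose proof (Rmax_r B (1/2)); lra. apply Rmax_lub_lt; lra. }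
      pose proof (hB r hr). pose proof (Rmax_l B (1/2)). lra.
  - apply partD; lia.
Qed.
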